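(* Let $I_3>0$, $g\in\mathbb{R}$, $a>0$, $b\neq 0$, and let $I_1(t)=a+bt$, considered on the time interval where $a+bt>0$. Consider the time-dependent Hamiltonian (Lagrange top in gravity with linearly time-dependent moment of inertia), in Euler angles $(\phi,\theta,\psi)$, $\theta\in(0,\pi)$, with conjugate momenta $(p_\phi,p_\theta,p_\psi)$: \[ H=\frac{1}{2I_1(t)}\Big(p_\theta^2+\frac{p_\phi^2+p_\psi^2-2p_\phi p_\psi\cos\theta}{\sin^2\theta}\Big)+\frac12\Big(\frac1{I_3}-\frac1{I_1(t)}\Big)p_\psi^2+g\cos\theta . \] Along any solution of Hamilton's equations, $p_\phi,p_\psi$ are constant, and with the new time $\tau=\log\big((a+bt)/a\big)$ (so that $I_1(t)=ae^{\tau}$) the function $y(\tau):=\theta(t)$ satisfies the trigonometric form of the degenerate fifth Painlevé equation \[ \frac{d^2y}{d\tau^2}=-\frac{\partial V}{\partial y},\qquad V(y,\tau)=-\frac{\kappa_\infty^2}{2\sin^2(y/2)}-\frac{\kappa_0^2}{2\cos^2(y/2)}-\frac{\gamma e^{\tau}}{2}\cos y, \] (i.e.\ $\delta=0$) with $\kappa_0^2=-\dfrac{(p_\phi+p_\psi)^2}{4b^2}$, $\kappa_\infty^2=-\dfrac{(p_\phi-p_\psi)^2}{4b^2}$, $\gamma=-\dfrac{2ag}{b^2}$. Conversely, the equation of motion of $\theta$ is equivalent to this equation.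
   Context: Hamilton's equations are $\dot q=\partial H/\partial p$, $\dot p=-\partial H/\partial q$ for each conjugate pair, with $\dot{}=d/dt$. The trigonometric form of $P_V$ with general $\delta$ has potential $V$ with the additional term $-\frac{\delta e^{2\tau}}{4}\cos^2y$; via $w=-\cot^2(y/2)$, $\zeta=e^\tau$ it is equivalent to the fifth Painlevé equation with $\alpha=\kappa_\infty^2/2$, $\beta=-\kappa_0^2/2$; the case $\delta=0$ is the degenerate fifth Painlevé equation. *)

(* Defs.v *)
From Stdlib Require Import Reals.
From Coquelicot Require Import Coquelicot.
Open Scope R_scope.

Definition I1 (a b t : R) : R := a + b * t.

Definition Ham (I3 g a b t : R) (phi th psi pphi pth ppsi : R) : R :=
  / (2 * I1 a b t) *
    (pth ^ 2 + (pphi ^ 2 + ppsi ^ 2 - 2 * pphi * ppsi * cos th) / (sin th) ^ 2)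
  + / 2 * (/ I3 - / I1 a b t) * ppsi ^ 2 + g * cos th.

Definition hamilton_solution (I3 g a b lo hi : R)
    (phi th psi pphi pth ppsi : R -> R) : Prop :=
  forall t, lo < t < hi ->
    let H := Ham I3 g a b t in
    is_derive phi t
      (Derive (fun x => H (phi t) (th t) (psi t) x (pth t) (ppsi t)) (pphi t)) /\
    is_derive th t
      (Derive (fun x => H (phi t) (th t) (psi t) (pphi t) x (ppsi t)) (pth t)) /\
    is_derive psi t
      (Derive (fun x => H (phi t) (th t) (psi t) (pphi t) (pth t) x) (ppsi t)) /\
    is_derive pphi t
      (- Derive (fun x => H x (th t) (psi t) (pphi t) (pth t) (ppsi t)) (phi t)) /\
    is_derive pth t
      (- Derive (fun x => H (phi t) x (psi t) (pphi t) (pth t) (ppsi t)) (th t)) /\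
    is_derive ppsi t
      (- Derive (fun x => H (phi t) (th t) x (pphi t) (pth t) (ppsi t)) (psi t)).

(* The equations of motion of the pair (theta, p_theta) alone, with
   p_phi, p_psi the given constants (phi, psi arbitrary: H does not depend
   on them). *)
Definition theta_equation (I3 g a b lo hi : R) (cphi cpsi : R)
    (phi psi : R -> R) (th pth : R -> R) : Prop :=
  forall t, lo < t < hi ->
    let H := Ham I3 g a b t in
    is_derive th t
      (Derive (fun x => H (phi t) (th t) (psi t) cphi x cpsi) (pth t)) /\
    is_derive pth t
      (- Derive (fun x => H (phi t) x (psi t) cphi (pth t) cpsi) (th t)).

(* Trigonometric form of P_V with delta = 0; kinf2, k02 stand for
   kappa_infinity^2 and kappa_0^2. *)
Definition VPV (kinf2 k02 gam : R) (y tau : R) : R :=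
  - kinf2 / (2 * (sin (y / 2)) ^ 2) - k02 / (2 * (cos (y / 2)) ^ 2)
  - gam * exp tau / 2 * cos y.

Definition kappa0_sq (b pphi ppsi : R) : R := - (pphi + ppsi) ^ 2 / (4 * b ^ 2).
Definition kappainf_sq (b pphi ppsi : R) : R := - (pphi - ppsi) ^ 2 / (4 * b ^ 2).
Definition gammaPV (a b g : R) : R := - (2 * a * g) / b ^ 2.

Definition tau_of (a b t : R) : R := ln ((a + b * t) / a).
Definition t_of (a b tau : R) : R := a * (exp tau - 1) / b.

Definition PV_deg_solution (kinf2 k02 gam a b lo hi : R) (y : R -> R) : Prop :=
  forall t, lo < t < hi ->
    let tau := tau_of a b t in
    ex_derive y tau /\
    is_derive (Derive y) tau
      (- Derive (fun z => VPV kinf2 k02 gam z tau) (y tau)).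

(* Main.v *)
Require Import Defs.
From Stdlib Require Import Reals Lra.
From Coquelicot Require Import Coquelicot.
Open Scope R_scope.

Definition dHth (g I P Q x : R) : R :=
  / (2 * I) * (2*P*Q*sin x / (sin x)^2 - (P^2+Q^2-2*P*Q*cos x) * (2*sin x*cos x)/(sin x)^4) - g * sin x.
Definition dV (K L gam y tau : R) : R :=
  K*cos(y/2)/(2*sin(y/2)^3) - L*sin(y/2)/(2*cos(y/2)^3) + gam*exp tau/2 * sin y.

Lemma Ham_dth I3 g a b t phi psi P p Q x : 0 < a + b*t -> sin x <> 0 ->
  Derive (fun z => Ham I3 g a b t phi z psi P p Q) x = dHth g (a+b*t) P Q x.
Proof.
intros HI Hs. apply is_derive_unique. unfold Ham, I1, dHth.
auto_derive. { auto. }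
field. lra.
Qed.

Lemma Ham_dpth I3 g a b t phi th psi P p Q : 0 < a + b*t ->
  Derive (fun z => Ham I3 g a b t phi th psi P z Q) p = p / (a+b*t).
Proof.
intros HI. apply is_derive_unique. unfold Ham, I1.
auto_derive. { auto. }
field. lra.
Qed.

Lemma VPV_dy K L gam y tau : sin (y/2) <> 0 -> cos (y/2) <> 0 ->
  Derive (fun z => VPV K L gam z tau) y = dV K L gam y tau.
Proof.
intros Hs Hc. apply is_derive_unique. unfold VPV, dV.
auto_derive; change (y * / 2) with (y / 2). 2: field; auto. repeat split; repeat apply Rmult_integral_contrapositive_currified; auto; lra.
Qed.

Lemma ident g a b P Q x tau : 0 < a -> b <> 0 -> 0 < x < PI ->
  dV (kappainf_sq b P Q) (kappa0_sq b P Q) (gammaPV a b g) x tau * b^2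
  = dHth g (a * exp tau) P Q x * (a * exp tau).
Proof.
intros Ha Hb Hx.
assert (Hs: 0 < sin (x/2)) by (apply sin_gt_0; lra).
assert (Hc: 0 < cos (x/2)) by (apply cos_gt_0; lra).
assert (He: 0 < exp tau) by apply exp_pos.
unfold dV, dHth, kappainf_sq, kappa0_sq, gammaPV.
assert (Ex1: sin x = 2 * sin (x/2) * cos (x/2)) by (rewrite <- sin_2a; f_equal; field).
assert (Ex2: cos x = cos (x/2) * cos (x/2) - sin (x/2) * sin (x/2)) by (rewrite <- cos_2a; f_equal; field).
rewrite Ex1, Ex2.
pose proof (sin2_cos2 (x/2)) as E. unfold Rsqr in E.
set (s := sin (x/2)) in *. set (c := cos (x/2)) in *.
field_simplify_eq.
2: repeat split; nra.
assert (H4: c^4 = c^2*(1-s^2)) by (rewrite <- E; ring).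
assert (H5: s^4 = s^2*(1-c^2)) by (rewrite <- E; ring).
rewrite H4, H5. ring.
Qed.
Lemma comp_tof (f : R -> R) (a b x v: R) : is_derive f (t_of a b x) v ->
  is_derive (fun tau => f (t_of a b tau)) x (v * (a * exp x / b)).
Proof. intros H. unfold t_of in *. auto_derive.
- change (a * (exp x + - (1)) * / b) with (a * (exp x - 1) / b). exists v; exact H.
- change (a * (exp x + - (1)) * / b) with (a * (exp x - 1) / b).
  change (fun x0 : R => f x0) with f. rewrite (is_derive_unique _ _ _ H). unfold Rdiv. ring.
Qed.
Lemma comp_tau (f : R -> R) (a b x v: R) : 0 < a -> 0 < a + b * x -> is_derive f (tau_of a b x) v ->
  is_derive (fun t => f (tau_of a b t)) x (v * (b / (a + b * x))).
Proof. intros Ha Hx H. unfold tau_of in *.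
assert (Hp: 0 < (a + b * x) / a) by (apply Rdiv_lt_0_compat; auto).
auto_derive.
- repeat split; auto. exists v; exact H.
- change ((a + b * x) * / a) with ((a + b * x) / a).
  change (fun x0 : R => f x0) with f. rewrite (is_derive_unique _ _ _ H). field. lra.
Qed.

Lemma loc_U a b lo hi tau : b <> 0 -> lo < t_of a b tau < hi ->
  locally tau (fun s => lo < t_of a b s < hi).
Proof.
intros Hb Ht.
assert (Hc : continuous (t_of a b) tau).
{ apply (@ex_derive_continuous R_AbsRing R_NormedModule). unfold t_of. auto_derive. exact I. }
exact (Hc (fun u => lo < u < hi) (open_and _ _ (open_gt lo) (open_lt hi) _ Ht)).
Qed.

Lemma loc_I lo hi t : lo < t < hi -> locally t (fun s => lo < s < hi).
Proof. intros Ht. exact (open_and _ _ (open_gt lo) (open_lt hi) _ Ht). Qed.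

Lemma tof_tau a b t : 0 < a -> b <> 0 -> 0 < a + b * t -> t_of a b (tau_of a b t) = t.
Proof. intros Ha Hb H. unfold t_of, tau_of. rewrite exp_ln.
field; lra. apply Rdiv_lt_0_compat; auto. Qed.

Lemma exp_tau a b t : 0 < a -> 0 < a + b * t -> a * exp (tau_of a b t) = a + b * t.
Proof. intros Ha H. unfold tau_of. rewrite exp_ln.
field; lra. apply Rdiv_lt_0_compat; auto. Qed.

Lemma half_pos x : 0 < x < PI -> 0 < sin (x/2) /\ 0 < cos (x/2) /\ 0 < sin x.
Proof. intros Hx. split; [apply sin_gt_0; lra|]. split; [apply cos_gt_0; lra|].
apply sin_gt_0; lra. Qed.

Lemma forward I3 g a b lo hi cphi cpsi phi psi th pth :
  0 < a -> b <> 0 -> (forall t, lo < t < hi -> 0 < a + b * t) ->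
  (forall t, lo < t < hi -> 0 < th t < PI) ->
  theta_equation I3 g a b lo hi cphi cpsi phi psi th pth ->
  PV_deg_solution (kappainf_sq b cphi cpsi) (kappa0_sq b cphi cpsi)
        (gammaPV a b g) a b lo hi (fun tau => th (t_of a b tau)).
Proof.
intros Ha Hb hJ Hth Heq t Ht. cbv zeta.
set (T := tau_of a b t).
assert (HtT : t_of a b T = t) by (apply tof_tau; auto).
assert (HaT : a * exp T = a + b * t) by (apply exp_tau; auto).
assert (HD : forall s, lo < t_of a b s < hi ->
  is_derive (fun tau => th (t_of a b tau)) s (pth (t_of a b s) / b)).
{ intros s Hs. set (u := t_of a b s) in *.
  pose proof (Heq u Hs) as HH. cbv zeta in HH. destruct HH as [H1 _].
  rewrite Ham_dpth in H1 by (apply hJ; auto).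
  assert (Hu : a + b * u = a * exp s) by (unfold u, t_of; field; auto).
  replace (pth u / b) with (pth u / (a + b * u) * (a * exp s / b)).
  - apply comp_tof. exact H1.
  - rewrite Hu. field. repeat split; auto; try lra; apply Rgt_not_eq; apply exp_pos. }
split.
{ exists (pth (t_of a b T) / b). apply HD. rewrite HtT. auto. }
apply is_derive_ext_loc with (f := fun s => / b * pth (t_of a b s)).
{ apply filter_imp with (P := fun s => lo < t_of a b s < hi).
  - intros s Hs. symmetry. apply is_derive_unique. replace (/ b * pth (t_of a b s)) with (pth (t_of a b s) / b) by (unfold Rdiv; ring). apply HD; auto.
  - apply loc_U; auto. rewrite HtT; auto. }
pose proof (Heq t Ht) as HH. cbv zeta in HH. destruct HH as [_ H2].
destruct (half_pos (th t) (Hth t Ht)) as [Hs [Hc Hsx]].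
rewrite Ham_dth in H2 by (auto; lra).
rewrite <- HtT in H2.
pose proof (comp_tof pth a b T _ H2) as H3. rewrite HtT in H3.
replace (- Derive (fun z : R => VPV (kappainf_sq b cphi cpsi) (kappa0_sq b cphi cpsi) (gammaPV a b g) z T)
    (th (t_of a b T))) with (/ b * (- dHth g (a + b * t) cphi cpsi (th t) * (a * exp T / b))).
{ apply is_derive_scal. exact H3. }
rewrite HtT, VPV_dy by lra.
pose proof (ident g a b cphi cpsi (th t) T Ha Hb (Hth t Ht)) as Hid.
rewrite HaT in Hid.
assert (Hb2 : b ^ 2 <> 0) by (apply pow_nonzero; auto).
apply Rmult_eq_reg_r with (b ^ 2); auto.
rewrite <- (Ropp_mult_distr_l (dV _ _ _ _ _)), Hid, HaT. field. auto.
Qed.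

Lemma backward I3 g a b lo hi cphi cpsi phi psi th :
  0 < a -> b <> 0 -> (forall t, lo < t < hi -> 0 < a + b * t) ->
  (forall t, lo < t < hi -> 0 < th t < PI) ->
  PV_deg_solution (kappainf_sq b cphi cpsi) (kappa0_sq b cphi cpsi)
        (gammaPV a b g) a b lo hi (fun tau => th (t_of a b tau)) ->
  exists pth, theta_equation I3 g a b lo hi cphi cpsi phi psi th pth.
Proof.
intros Ha Hb hJ Hth HPV.
set (y := fun tau => th (t_of a b tau)) in *.
exists (fun s => b * Derive y (tau_of a b s)).
intros t Ht. cbv zeta.
set (T := tau_of a b t).
assert (HtT : t_of a b T = t) by (apply tof_tau; auto).
assert (HaT : a * exp T = a + b * t) by (apply exp_tau; auto).
pose proof (hJ t Ht) as Hp.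
destruct (HPV t Ht) as [Hex Hdd]. cbv zeta in Hex, Hdd. fold T in Hex, Hdd.
destruct (half_pos (th t) (Hth t Ht)) as [Hs [Hc Hsx]].
split.
- rewrite Ham_dpth by auto.
  apply is_derive_ext_loc with (f := fun s => y (tau_of a b s)).
  { apply filter_imp with (P := fun s => lo < s < hi).
    - intros s Hs'. unfold y. rewrite tof_tau; auto.
    - apply loc_I; auto. }
  replace (b * Derive y T / (a + b * t)) with (Derive y T * (b / (a + b * t))) by (field; lra).
  apply comp_tau; auto.
  destruct Hex as [l Hl]. rewrite (is_derive_unique _ _ _ Hl). exact Hl.
- rewrite Ham_dth by (auto; lra).
  pose proof (comp_tau _ a b t _ Ha Hp Hdd) as H3.
  pose proof (is_derive_scal _ t b _ H3) as H4.
  replace (- dHth g (a + b * t) cphi cpsi (th t)) with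
    (b * (- Derive (fun z : R => VPV (kappainf_sq b cphi cpsi) (kappa0_sq b cphi cpsi) (gammaPV a b g) z T) (y T) * (b / (a + b * t)))).
  { exact H4. }
  unfold y. rewrite HtT, VPV_dy by lra.
  pose proof (ident g a b cphi cpsi (th t) T Ha Hb (Hth t Ht)) as Hid.
  rewrite HaT in Hid.
  replace (dV (kappainf_sq b cphi cpsi) (kappa0_sq b cphi cpsi) (gammaPV a b g) (th t) T)
    with (dHth g (a + b * t) cphi cpsi (th t) * (a + b * t) / b ^ 2).
  + field. split; lra.
  + rewrite <- Hid. field. auto.
Qed.

Lemma Ham_dphi I3 g a b t th psi P p Q z :
  Derive (fun x => Ham I3 g a b t x th psi P p Q) z = 0.
Proof. unfold Ham. apply Derive_const. Qed.
Lemma Ham_dpsi I3 g a b t phi th P p Q z :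
  Derive (fun x => Ham I3 g a b t phi th x P p Q) z = 0.
Proof. unfold Ham. apply Derive_const. Qed.

Lemma const_int (f : R -> R) lo hi : (forall u, lo < u < hi -> is_derive f u 0) ->
  forall t s, lo < t < hi -> lo < s < hi -> f t = f s.
Proof.
intros H t s Ht Hs. destruct (total_order_T t s) as [[Hlt|Heq]|Hgt].
- apply eq_is_derive; auto. intros u Hu. apply H. lra.
- subst; auto.
- symmetry. apply eq_is_derive; auto. intros u Hu. apply H. lra.
Qed.

Theorem theorem2 (I3 g a b lo hi : R)
  (hI3 : 0 < I3) (ha : 0 < a) (hb : b <> 0)
  (hJ : forall t, lo < t < hi -> 0 < a + b * t) :
  (* direct statement *)
  (forall phi th psi pphi pth ppsi : R -> R,
     hamilton_solution I3 g a b lo hi phi th psi pphi pth ppsi ->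
     (forall t, lo < t < hi -> 0 < th t < PI) ->
     (forall t s, lo < t < hi -> lo < s < hi -> pphi t = pphi s) /\
     (forall t s, lo < t < hi -> lo < s < hi -> ppsi t = ppsi s) /\
     (forall t, lo < t < hi ->
        PV_deg_solution (kappainf_sq b (pphi t) (ppsi t))
          (kappa0_sq b (pphi t) (ppsi t)) (gammaPV a b g) a b lo hi
          (fun tau => th (t_of a b tau)))) /\
  (* converse: the equation of motion of theta is equivalent to P_V *)
  (forall (cphi cpsi : R) (phi psi th : R -> R),
     (forall t, lo < t < hi -> 0 < th t < PI) ->
     ((exists pth : R -> R, theta_equation I3 g a b lo hi cphi cpsi phi psi th pth)
      <->
      PV_deg_solution (kappainf_sq b cphi cpsi) (kappa0_sq b cphi cpsi)
        (gammaPV a b g) a b lo hi (fun tau => th (t_of a b tau)))).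
Proof.
split.
- intros phi th psi pphi pth ppsi Hham Hth.
  assert (Cphi : forall t s, lo < t < hi -> lo < s < hi -> pphi t = pphi s).
  { apply const_int. intros u Hu. pose proof (Hham u Hu) as HH. cbv zeta in HH.
    destruct HH as [_ [_ [_ [H _]]]]. rewrite Ham_dphi, Ropp_0 in H. exact H. }
  assert (Cpsi : forall t s, lo < t < hi -> lo < s < hi -> ppsi t = ppsi s).
  { apply const_int. intros u Hu. pose proof (Hham u Hu) as HH. cbv zeta in HH.
    destruct HH as [_ [_ [_ [_ [_ H]]]]]. rewrite Ham_dpsi, Ropp_0 in H. exact H. }
  split; [exact Cphi|]. split; [exact Cpsi|].
  intros t0 Ht0.
  apply (forward I3 g a b lo hi (pphi t0) (ppsi t0) phi psi th pth); auto.
  intros t Ht. pose proof (Hham t Ht) as HH. cbv zeta in HH.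
  destruct HH as [_ [H1 [_ [_ [H2 _]]]]].
  rewrite (Cphi t t0), (Cpsi t t0) in H1, H2 by auto. cbv zeta. split; auto.
- intros cphi cpsi phi psi th Hth. split.
  + intros [pth H]. apply (forward I3 g a b lo hi cphi cpsi phi psi th pth); auto.
  + apply backward; auto.
Qed.
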